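(* The families $\{d_\xi^{-1/2}\Pi_{\xi\alpha\beta}\}_{\xi,\alpha,\beta}$ and $\{d_\xi^{-1/2}\mathrm{Twirl}_{\xi\alpha\beta}\}_{\xi,\alpha,\beta}$ (over all isomorphism types $\xi$ occurring in $\mathcal L(V)$ and $1\le\alpha,\beta\le m_\xi$) are both orthonormal bases of $\mathrm{Hom}_G(\mathcal L(V),\mathcal L(V))$, which has dimension $\sum_\xi m_\xi^2$. Consequently the square matrix $U$ with entries \[ U_{(\xi,\alpha,\beta),(\rho,\mu,\nu)}=\Big\langle\!\!\Big\langle \tfrac1{\sqrt{d_\xi}}\Pi_{\xi\alpha\beta},\tfrac1{\sqrt{d_\rho}}\mathrm{Twirl}_{\rho\mu\nu}\Big\rangle\!\!\Big\rangle \] is unitary.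
   Context: Let $G$ be a group and $V$ a finite-dimensional complex Hilbert space carrying a unitary representation $\rho$ of $G$; $G$ acts on $\mathcal L(V)$ by conjugation $g\cdot X=\rho(g)X\rho(g)^\dagger$, unitarily for the Hilbert–Schmidt inner product $\langle X_1,X_2\rangle=\mathrm{Tr}(X_1^\dagger X_2)$. Let $\mathcal L(V)=\bigoplus_\xi\mathcal E_\xi$ be the isotypic decomposition, $m_\xi$ the multiplicity and $d_\xi$ the dimension of the irreducible type $\xi$. Choose an orthogonal decomposition $\mathcal E_\xi=\bigoplus_{\alpha=1}^{m_\xi}\mathcal E_{\xi\alpha}$ into irreducible subrepresentations, $G$-equivariant isometric isomorphisms $\phi^\xi_{1\alpha}:\mathcal E_{\xi1}\to\mathcal E_{\xi\alpha}$ with $\phi^\xi_{11}=\mathrm{id}$, and set $\phi^\xi_{\alpha\beta}=\phi^\xi_{1\beta}(\phi^\xi_{1\alpha})^\dagger$. Fix an orthonormal basis $\{E_i^1\}_{i=1}^{d_\xi}$ of $\mathcal E_{\xi1}$ and put $E_i^\alpha=\phi^\xi_{1\alpha}(E_i^1)$ (the dependence on $\xi$ is suppressed). Define the projector matrix units $\Pi_{\xi\alpha\beta}(X)=\sum_{i=1}^{d_\xi}\langle E_i^\alpha,X\rangle E_i^\beta$ and twirl matrix units $\mathrm{Twirl}_{\xi\alpha\beta}(X)=\sum_{i=1}^{d_\xi}(E_i^\alpha)^\dagger XE_i^\beta$. On linear maps $\mathcal L(V)\to\mathcal L(V)$ use $\langle\!\langle\mathcal S,\mathcal T\rangle\!\rangle=\mathrm{Tr}(\mathcal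 S^\dagger\mathcal T)=\sum_{Y\in\mathcal B}\langle\mathcal S(Y),\mathcal T(Y)\rangle$ ($\mathcal B$ any orthonormal basis of $\mathcal L(V)$). $\mathrm{Hom}_G(\mathcal L(V),\mathcal L(V))$ is the space of $G$-equivariant linear maps. *)

(* Defs.v *)
From HB Require Import structures.
From mathcomp Require Import monoid.
From mathcomp Require Import all_boot all_order all_algebra.
From mathcomp Require Import complex.
From mathcomp Require Import reals.

Set Implicit Arguments.
Unset Strict Implicit.
Unset Printing Implicit Defensive.

Import GRing.Theory Num.Theory.
Local Open Scope ring_scope.

Section Defs.
Variable R : realType.
Local Notation C := R[i].

Definition adjmx (p q : nat) (A : 'M[C]_(p, q)) : 'M[C]_(q, p) :=
  (map_mx Num.conj A)^T.

Definition unitary_mx (p : nat) (A : 'M[C]_p) : Prop :=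
  adjmx A *m A = 1%:M /\ A *m adjmx A = 1%:M.

Variable n : nat.
(* V = C^n, L(V) = 'M[C]_n. *)

Definition hs (X Y : 'M[C]_n) : C := \tr (adjmx X *m Y).

(* inner product on linear maps L(V) -> L(V), computed with the
   orthonormal basis of matrix units {delta_mx i j} of L(V) *)
Definition hs_maps (S T : 'M[C]_n -> 'M[C]_n) : C :=
  \sum_(i < n) \sum_(j < n) hs (S (delta_mx i j)) (T (delta_mx i j)).

Variable G : groupType.

Definition unitary_rep (rho : G -> 'M[C]_n) : Prop :=
  [/\ (forall x y : G, rho (x * y)%g = rho x *m rho y),
      rho 1%g = 1%:M
    & (forall x : G, unitary_mx (rho x))].

Variable rho : G -> 'M[C]_n.

Definition conj_act (g : G) (X : 'M[C]_n) : 'M[C]_n :=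
  rho g *m X *m adjmx (rho g).

Definition equivariant (T : 'M[C]_n -> 'M[C]_n) : Prop :=
  forall (g : G) (X : 'M[C]_n), T (conj_act g X) = conj_act g (T X).

Definition invariant_sub (W : {vspace 'M[C]_n}) : Prop :=
  forall (g : G) (X : 'M[C]_n), X \in W -> conj_act g X \in W.

Definition irreducible_sub (W : {vspace 'M[C]_n}) : Prop :=
  [/\ W != 0%VS, invariant_sub W &
      (forall U : {vspace 'M[C]_n}, (U <= W)%VS -> invariant_sub U ->
        U = 0%VS \/ U = W)].

Definition isomorphic_sub (U W : {vspace 'M[C]_n}) : Prop :=
  exists f : 'End('M[C]_n),
    [/\ (f @: U)%VS = W, \dim W = \dim U &
        (forall (g : G) (X : 'M[C]_n), X \in U -> f (conj_act g X) = conj_act g (f X))].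

(* Decomposition data: I indexes the distinct irreducible types xi occurring
   in L(V), m xi is the multiplicity, d xi the dimension, and
   E xi a i = E_i^a is the i-th vector of the chosen orthonormal basis of
   E_{xi a}, with E_i^a = phi_{1 a}(E_i^1). *)
Variables (I : finType) (m d : I -> nat).
Variable E : forall xi : I, 'I_(m xi) -> 'I_(d xi) -> 'M[C]_n.

Definition Esp (xi : I) (a : 'I_(m xi)) : {vspace 'M[C]_n} :=
  <<[seq E a i | i : 'I_(d xi)]>>%VS.

(* phi_{a b} : E_{xi a} -> E_{xi b}, E_i^a |-> E_i^b (extended by the
   orthogonal projection onto E_{xi a}) *)
Definition phi (xi : I) (a b : 'I_(m xi)) (X : 'M[C]_n) : 'M[C]_n :=
  \sum_(i < d xi) hs (E a i) X *: E b i.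

Definition Proj (xi : I) (a b : 'I_(m xi)) (X : 'M[C]_n) : 'M[C]_n :=
  \sum_(i < d xi) hs (E a i) X *: E b i.

Definition Twirl (xi : I) (a b : 'I_(m xi)) (X : 'M[C]_n) : 'M[C]_n :=
  \sum_(i < d xi) adjmx (E a i) *m X *m E b i.

(* The hypotheses on the data:
   - every type xi occurs (m xi >= 1);
   - {E_i^a}_{xi,a,i} is orthonormal and the E_{xi a} span L(V), i.e.
     L(V) = (+)_{xi,a} E_{xi a} is an orthogonal decomposition and each
     {E_i^a}_i is an orthonormal basis of E_{xi a};
   - each E_{xi a} is an irreducible subrepresentation;
   - the maps phi_{a b} : E_i^a |-> E_i^b are G-equivariant on E_{xi a}
     (they are isometric isomorphisms as they map an orthonormal basis to
     an orthonormal basis);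
   - distinct xi are distinct isomorphism types, so that
     E_xi = (+)_a E_{xi a} is the xi-isotypic component. *)
Definition decomposition : Prop :=
  (forall xi, (0 < m xi)%N) /\
      (forall (xi xi' : I) (a : 'I_(m xi)) (a' : 'I_(m xi'))
             (i : 'I_(d xi)) (i' : 'I_(d xi')),
        hs (E a i) (E a' i') =
          ((xi == xi') && (a == a' :> nat) && (i == i' :> nat))%:R) /\
      (\sum_(xi : I) \sum_(a < m xi) Esp a)%VS = fullv /\
      (forall (xi : I) (a : 'I_(m xi)), irreducible_sub (Esp a)) /\
      (forall (xi : I) (a b : 'I_(m xi)) (g : G) (i : 'I_(d xi)),
        phi a b (conj_act g (E a i)) = conj_act g (E b i)) /\
    (forall (xi xi' : I) (a : 'I_(m xi)) (a' : 'I_(m xi')),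
        xi != xi' -> ~ isomorphic_sub (Esp a) (Esp a')).

Definition pairT (xi : I) : finType := ('I_(m xi) * 'I_(m xi))%type.
Definition Idx : finType := {xi : I & pairT xi}.

Definition PiN (k : Idx) : 'End('M[C]_n) :=
  (sqrtC (d (tag k))%:R)^-1 *: linfun (Proj (tagged k).1 (tagged k).2).
Definition TwN (k : Idx) : 'End('M[C]_n) :=
  (sqrtC (d (tag k))%:R)^-1 *: linfun (Twirl (tagged k).1 (tagged k).2).

Definition orthonormal_family (F : Idx -> 'End('M[C]_n)) : Prop :=
  forall k k' : Idx, hs_maps (F k) (F k') = (k == k')%:R.

Definition Umx : 'M[C]_#|Idx| :=
  \matrix_(p < #|Idx|, q < #|Idx|) hs_maps (PiN (enum_val p)) (TwN (enum_val q)).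

End Defs.

(* Main.v *)
Require Import Defs.
From HB Require Import structures.
From mathcomp Require Import monoid.
From mathcomp Require Import all_boot all_order all_algebra.
From mathcomp Require Import complex.
From mathcomp Require Import reals.
From mathcomp Require Import ring.
Import GRing.Theory Num.Theory.
Local Open Scope ring_scope.
Set Implicit Arguments.
Unset Strict Implicit.
Unset Printing Implicit Defensive.

Section Basic.
Variable R : realType.
Local Notation C := R[i].
Variable n : nat.
Implicit Types X Y Z : 'M[C]_n.

Lemma adjmxE p q (A : 'M[C]_(p,q)) i j : adjmx A i j = (A j i)^*.
Proof. by rewrite /adjmx !mxE. Qed.

Lemma adjmx_mul p q r (A : 'M[C]_(p,q)) (B : 'M[C]_(q,r)) :
  adjmx (A *m B) = adjmx B *m adjmx A.
Proof. by rewrite /adjmx map_mxM trmx_mul. Qed.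

Lemma adjmxK p q (A : 'M[C]_(p,q)) : adjmx (adjmx A) = A.
Proof. by apply/matrixP => i j; rewrite !adjmxE conjCK. Qed.

Lemma adjmxD p q (A B : 'M[C]_(p,q)) : adjmx (A + B) = adjmx A + adjmx B.
Proof. by apply/matrixP => i j; rewrite !mxE rmorphD. Qed.

Lemma adjmxZ p q a (A : 'M[C]_(p,q)) : adjmx (a *: A) = a^* *: adjmx A.
Proof. by apply/matrixP => i j; rewrite !mxE rmorphM. Qed.

Lemma adjmx_sum p q (I : Type) (r : seq I) (P : pred I) (F : I -> 'M[C]_(p,q)) :
  adjmx (\sum_(i <- r | P i) F i) = \sum_(i <- r | P i) adjmx (F i).
Proof.
elim/big_rec2: _ => [|i A B _ <-]; last by rewrite adjmxD.
by apply/matrixP => i j; rewrite !adjmxE !mxE rmorph0.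
Qed.

Lemma hsE X Y : hs X Y = \sum_p \sum_q (X p q)^* * Y p q.
Proof.
rewrite /hs /mxtrace exchange_big /=; apply: eq_bigr => q _.
by rewrite mxE; apply: eq_bigr => p _; rewrite adjmxE.
Qed.

Fact hs_is_linear X : linear_for *%R (hs X).
Proof.
move=> a Y Z; rewrite /hs mulmxDr -scalemxAr mxtraceD mxtraceZ //.
Qed.
HB.instance Definition _ X := GRing.isLinear.Build C 'M[C]_n C *%R (hs X) (hs_is_linear X).

Lemma hsC X Y : hs Y X = (hs X Y)^*.
Proof.
rewrite !hsE rmorph_sum; apply: eq_bigr => p _.
rewrite rmorph_sum; apply: eq_bigr => q _.
by rewrite rmorphM /= conjCK mulrC.
Qed.

Lemma hsZr X a Y : hs X (a *: Y) = a * hs X Y.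
Proof. by rewrite linearZ. Qed.
Lemma hsZl X a Y : hs (a *: X) Y = a^* * hs X Y.
Proof. by rewrite hsC linearZ /= rmorphM /= -hsC. Qed.
Lemma hs_sumr X (I : Type) (r : seq I) (P : pred I) (F : I -> 'M[C]_n) :
  hs X (\sum_(i <- r | P i) F i) = \sum_(i <- r | P i) hs X (F i).
Proof. by rewrite linear_sum. Qed.
Lemma hs_suml X (I : Type) (r : seq I) (P : pred I) (F : I -> 'M[C]_n) :
  hs (\sum_(i <- r | P i) F i) X = \sum_(i <- r | P i) hs (F i) X.
Proof. rewrite hsC linear_sum rmorph_sum; apply: eq_bigr => i _; by rewrite [RHS]hsC. Qed.
End Basic.

Section Gen.
Variables (K : fieldType) (V : vectType K) (T : finType) (F : T -> V).

Lemma span_exists_seq (s : seq T) v : v \in (\sum_(k <- s) <[F k]>)%VS ->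
  exists c : T -> K, v = \sum_k c k *: F k.
Proof.
elim: s v => [|k s IH] v.
  rewrite big_nil memv0 => /eqP ->; exists (fun _ => 0).
  by rewrite big1 // => k _; rewrite scale0r.
rewrite big_cons => /memv_addP [a /vlineP [x ->] [b /IH [c ->] ->]].
exists (fun j => c j + (j == k)%:R * x).
rewrite [RHS](eq_bigr (fun j => c j *: F j + ((j == k)%:R * x) *: F j)).
  rewrite big_split /= addrC; congr (_ + _).
  rewrite (bigD1 k) //= eqxx mul1r big1 ?addr0 // => j /negbTE ->.
  by rewrite mul0r scale0r.
by move=> j _; rewrite scalerDl.
Qed.

Lemma span_exists v : v \in <<[seq F k | k : T]>>%VS ->
  exists c : T -> K, v = \sum_k c k *: F k.
Proof. by rewrite span_def big_map => /span_exists_seq. Qed.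
End Gen.
Section Main.
Variables (R : realType) (n : nat) (G : groupType).
Local Notation C := R[i].
Variable rho : G -> 'M[C]_n.
Hypothesis hrho : unitary_rep rho.
Variables (I : finType) (m d : I -> nat).
Variable E : forall xi : I, 'I_(m xi) -> 'I_(d xi) -> 'M[C]_n.
Hypothesis hE : decomposition rho E.
Local Notation cg := (conj_act rho).
Implicit Types X Y Z : 'M[C]_n.

Lemma rho_unit g : adjmx (rho g) *m rho g = 1%:M /\ rho g *m adjmx (rho g) = 1%:M.
Proof. by case: hrho => _ _ /(_ g). Qed.

Lemma rhoV g : rho (g^-1)%g = adjmx (rho g).
Proof.
case: hrho => hM h1 _.
have := hM g (g^-1)%g; rewrite mulgV h1 => /(congr1 (mulmx (adjmx (rho g)))).
by rewrite mulmxA (rho_unit g).1 mul1mx mulmx1 => ->.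
Qed.

Lemma conj_actK g X : cg (g^-1)%g (cg g X) = X.
Proof.
rewrite /conj_act rhoV adjmxK !mulmxA (rho_unit g).1 mul1mx -!mulmxA.
by rewrite (rho_unit g).1 mulmx1.
Qed.

Lemma conj_actKV g X : cg g (cg (g^-1)%g X) = X.
Proof.
rewrite /conj_act rhoV adjmxK !mulmxA (rho_unit g).2 mul1mx -!mulmxA.
by rewrite (rho_unit g).2 mulmx1.
Qed.

Fact conj_act_is_linear g : linear (cg g).
Proof.
by move=> a X Y; rewrite /conj_act mulmxDr mulmxDl -scalemxAr -scalemxAl.
Qed.
HB.instance Definition _ g := GRing.isLinear.Build C 'M[C]_n 'M[C]_n *:%R (cg g)
  (conj_act_is_linear g).

Lemma hs_conj g X Y : hs (cg g X) (cg g Y) = hs X Y.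
Proof.
rewrite /hs /conj_act !adjmx_mul adjmxK !mulmxA -[_ *m adjmx X *m _ *m _]mulmxA.
rewrite (rho_unit g).1 mulmx1 -!mulmxA mxtrace_mulC !mulmxA -[_ *m adjmx (rho g) *m rho g]mulmxA.
by rewrite (rho_unit g).1 mulmx1.
Qed.

Lemma hs_conjl g X Y : hs (cg g X) Y = hs X (cg (g^-1)%g Y).
Proof. by rewrite -{1}(conj_actKV g Y) hs_conj. Qed.

Lemma m_gt0 xi : (0 < m xi)%N. Proof. by case: hE. Qed.
Lemma hsEE xi xi' (a : 'I_(m xi)) (a' : 'I_(m xi')) i i' :
  hs (E a i) (E a' i') = ((xi == xi') && (a == a' :> nat) && (i == i' :> nat))%:R.
Proof. by case: hE => _ [->]. Qed.
Lemma hsEE1 xi (a a' : 'I_(m xi)) i i' :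
  hs (E a i) (E a' i') = ((a == a') && (i == i'))%:R.
Proof. by rewrite hsEE eqxx. Qed.
Lemma Esum : (\sum_(xi : I) \sum_(a < m xi) Esp E a)%VS = fullv.
Proof. by case: hE => _ [_ []]. Qed.
Lemma Eirr xi (a : 'I_(m xi)) : irreducible_sub rho (Esp E a).
Proof. by case: hE => _ [_ [_ []]]. Qed.
Lemma Ephi xi (a b : 'I_(m xi)) g i : Proj E a b (cg g (E a i)) = cg g (E b i).
Proof. by case: hE => _ [_ [_ [_ [h _]]]]; exact: h. Qed.
Lemma Eniso xi xi' (a : 'I_(m xi)) (a' : 'I_(m xi')) :
  xi != xi' -> ~ isomorphic_sub rho (Esp E a) (Esp E a').
Proof. by case: hE => _ [_ [_ [_ [_ h]]]]; exact: h. Qed.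

Lemma Esp_tuple xi (a : 'I_(m xi)) : Esp E a = <<[tuple E a i | i < d xi]>>%VS.
Proof. by rewrite /Esp; congr (span _). Qed.

Lemma E_in xi (a : 'I_(m xi)) i : E a i \in Esp E a.
Proof. by apply: memv_span; apply: map_f; rewrite mem_enum. Qed.

Lemma Esp_coord xi (a : 'I_(m xi)) v : v \in Esp E a ->
  exists c : 'I_(d xi) -> C, v = \sum_i c i *: E a i.
Proof.
rewrite Esp_tuple => /coord_span ->; eexists; apply: eq_bigr => i _.
by rewrite nth_mktuple.
Qed.

Fact Proj_is_linear xi (a b : 'I_(m xi)) : linear (Proj E a b).
Proof.
move=> k X Y; rewrite /Proj scaler_sumr -big_split; apply: eq_bigr => i _.
by rewrite linearP /= scalerDl scalerA.
Qed.
HB.instance Definition _ xi (a b : 'I_(m xi)) :=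
  GRing.isLinear.Build C 'M[C]_n 'M[C]_n *:%R (Proj E a b) (Proj_is_linear a b).

Fact Twirl_is_linear xi (a b : 'I_(m xi)) : linear (Twirl E a b).
Proof.
move=> k X Y; rewrite /Twirl scaler_sumr -big_split; apply: eq_bigr => i _.
by rewrite mulmxDr mulmxDl -scalemxAr -scalemxAl.
Qed.
HB.instance Definition _ xi (a b : 'I_(m xi)) :=
  GRing.isLinear.Build C 'M[C]_n 'M[C]_n *:%R (Twirl E a b) (Twirl_is_linear a b).

Lemma delta3 (V : lmodType C) (F : forall xi, 'I_(m xi) -> 'I_(d xi) -> V)
   xi (a : 'I_(m xi)) (j : 'I_(d xi)) :
  \sum_xi' \sum_(a' < m xi') \sum_(i' < d xi')
     ((xi' == xi) && (a' == a :> nat) && (i' == j :> nat))%:R *: F xi' a' i'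
  = F xi a j.
Proof.
rewrite (bigD1 xi) //= [X in _ + X]big1 ?addr0; last first.
  move=> xi' ne; rewrite (negbTE ne).
  by apply: big1 => a' _; apply: big1 => i' _; rewrite scale0r.
rewrite (bigD1 a) //= [X in _ + X]big1 ?addr0; last first.
  move=> a' ne; have -> : (a' == a :> nat) = false by exact: (negbTE ne).
  by apply: big1 => i' _; rewrite eqxx andbF scale0r.
rewrite (bigD1 j) //= [X in _ + X]big1 ?addr0; last first.
  move=> i' ne; have -> : (i' == j :> nat) = false by exact: (negbTE ne).
  by rewrite !eqxx andbF scale0r.
by rewrite !eqxx scale1r.
Qed.

Definition expand X :=
  \sum_xi \sum_(a < m xi) \sum_(i < d xi) hs (E a i) X *: E a i.

Fact expand_is_linear : linear expand.
Proof.
move=> k X Y; rewrite /expand scaler_sumr -big_split; apply: eq_bigr => xi _.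
rewrite scaler_sumr -big_split; apply: eq_bigr => a _.
rewrite scaler_sumr -big_split; apply: eq_bigr => i _.
by rewrite linearP /= scalerDl scalerA.
Qed.
HB.instance Definition _ :=
  GRing.isLinear.Build C 'M[C]_n 'M[C]_n *:%R expand expand_is_linear.

Lemma expand_E xi (a : 'I_(m xi)) j : expand (E a j) = E a j.
Proof.
rewrite -[RHS](delta3 (fun xi a i => E a i)); apply: eq_bigr => xi' _.
by apply: eq_bigr => a' _; apply: eq_bigr => i' _; rewrite hsEE.
Qed.

Lemma expand_Esp xi (a : 'I_(m xi)) v : v \in Esp E a -> expand v = v.
Proof.
move=> /Esp_coord [c ->]; rewrite linear_sum; apply: eq_bigr => i _.
by rewrite linearZ /= expand_E.
Qed.

Lemma expand_id X : expand X = X.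
Proof.
have : X \in fullv by rewrite memvf.
rewrite -Esum => /memv_sumP [vs Hvs ->]; rewrite linear_sum.
apply: eq_bigr => xi _; move: (Hvs xi isT) => /memv_sumP [ws Hws ->].
rewrite linear_sum; apply: eq_bigr => a _; exact: expand_Esp (Hws a isT).
Qed.

Lemma orthE xi xi' (a : 'I_(m xi)) (a' : 'I_(m xi')) j Z :
  Z \in Esp E a -> ~~ ((xi == xi') && (a == a' :> nat)) -> hs Z (E a' j) = 0.
Proof.
move=> /Esp_coord [c ->] h; rewrite hs_suml big1 // => i _.
by rewrite hsZl hsEE (negbTE h) /= mulr0.
Qed.

Lemma hs_conjr g X Y : hs X (cg g Y) = hs (cg (g^-1)%g X) Y.
Proof. by rewrite -(hs_conj (g^-1)%g) conj_actK. Qed.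

Lemma Esp_inv xi (a : 'I_(m xi)) g X : X \in Esp E a -> cg g X \in Esp E a.
Proof. by case: (Eirr a) => _ hinv _; exact: hinv. Qed.

Lemma Proj_E xi (a b : 'I_(m xi)) i : Proj E a b (E a i) = E b i.
Proof.
rewrite /Proj (bigD1 i) //= hsEE1 !eqxx scale1r big1 ?addr0 // => j ne.
by rewrite hsEE1 eqxx /= (negbTE ne) scale0r.
Qed.

Lemma Proj_E0 xi xi' (a b : 'I_(m xi)) (a' : 'I_(m xi')) j :
  ~~ ((xi == xi') && (a == a' :> nat)) -> Proj E a b (E a' j) = 0.
Proof.
move=> h; rewrite /Proj big1 // => i _.
by rewrite (orthE _ (E_in a i) h) scale0r.
Qed.

Lemma ext_E (F1 F2 : {linear 'M[C]_n -> 'M[C]_n}) :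
  (forall xi (a : 'I_(m xi)) j, F1 (E a j) = F2 (E a j)) -> F1 =1 F2.
Proof.
move=> H X; rewrite -[X]expand_id /expand !linear_sum; apply: eq_bigr => xi _.
rewrite !linear_sum; apply: eq_bigr => a _.
rewrite !linear_sum; apply: eq_bigr => j _.
by rewrite !linearZ /= H.
Qed.

Lemma ext_E_fun (f1 f2 : 'M[C]_n -> 'M[C]_n) (h1 : linear f1) (h2 : linear f2) :
  (forall xi (a : 'I_(m xi)) j, f1 (E a j) = f2 (E a j)) -> forall X, f1 X = f2 X.
Proof.
move=> H X.
pose F1 : {linear 'M[C]_n -> 'M[C]_n} :=
  HB.pack f1 (GRing.isLinear.Build C 'M[C]_n 'M[C]_n *:%R f1 h1).
pose F2 : {linear 'M[C]_n -> 'M[C]_n} :=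
  HB.pack f2 (GRing.isLinear.Build C 'M[C]_n 'M[C]_n *:%R f2 h2).
exact: (@ext_E F1 F2 H X).
Qed.

Lemma Proj_equiv xi (a b : 'I_(m xi)) g X :
  Proj E a b (cg g X) = cg g (Proj E a b X).
Proof.
apply: (@ext_E_fun (fun X => Proj E a b (cg g X)) (fun X => cg g (Proj E a b X))).
- by move=> k x y /=; rewrite !linearP.
- by move=> k x y /=; rewrite !linearP.
move=> xi' a' j /=.
case h: ((xi == xi') && (a == a' :> nat)).
  move/andP: h => [/eqP e1 e2]; subst xi'.
  have -> : a' = a by apply/val_inj/eqP; rewrite eq_sym.
  by rewrite Proj_E Ephi.
rewrite (Proj_E0 _ _ (negbT h)) linear0 /Proj big1 // => i _.
rewrite hs_conjr (orthE _ (Esp_inv _ (E_in a i)) (negbT h)).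
by rewrite scale0r.
Qed.

Lemma hs_E_sum xi (a : 'I_(m xi)) (c : 'I_(d xi) -> C) j :
  hs (E a j) (\sum_i c i *: E a i) = c j.
Proof.
rewrite hs_sumr (bigD1 j) //= hsZr hsEE1 !eqxx mulr1 big1 ?addr0 // => i ne.
by rewrite hsZr hsEE1 eqxx /= eq_sym (negbTE ne) mulr0.
Qed.

Lemma Esp_exp xi (a : 'I_(m xi)) v : v \in Esp E a ->
  v = \sum_i hs (E a i) v *: E a i.
Proof.
move=> /Esp_coord [c ->]; apply: eq_bigr => i _; by rewrite hs_E_sum.
Qed.

Lemma hs_Proj xi (a b : 'I_(m xi)) j Y : hs (E b j) (Proj E a b Y) = hs (E a j) Y.
Proof. by rewrite /Proj hs_E_sum. Qed.

Lemma Proj_in xi (a b : 'I_(m xi)) Y : Proj E a b Y \in Esp E b.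
Proof. by rewrite /Proj; apply: rpred_sum => i _; apply: memvZ; apply: E_in. Qed.

Lemma d_gt0 xi : (0 < d xi)%N.
Proof.
have [nz _ _] := Eirr (Ordinal (m_gt0 xi)).
rewrite lt0n; apply/negP => /eqP d0; move: nz; rewrite /Esp.
suff -> : [seq E (Ordinal (m_gt0 xi)) i | i : 'I_(d xi)] = [::] by rewrite span_nil eqxx.
apply/nilP; rewrite /nilp size_map -cardE card_ord d0 //.
Qed.

Lemma schur_scalar xi (a : 'I_(m xi)) (k : 'End('M[C]_n)) :
  (forall X, X \in Esp E a -> k X \in Esp E a) ->
  (forall g X, X \in Esp E a -> k (cg g X) = cg g (k X)) ->
  exists lam, forall X, X \in Esp E a -> k X = lam *: X.
Proof.
move=> kin keq.
pose M : 'M[C]_(d xi) := \matrix_(i, j) hs (E a j) (k (E a i)).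
have [lam] : exists lam, root (char_poly M) lam.
  apply/closed_rootP; rewrite size_char_poly; have := d_gt0 xi; by case: (d xi).
rewrite -eigenvalue_root_char => /eigenvalueP [v vM vnz].
pose X0 := \sum_i v 0 i *: E a i.
have X0in : X0 \in Esp E a by apply: rpred_sum => i _; apply: memvZ; apply: E_in.
have X0nz : X0 != 0.
  apply: contraNneq vnz => X00; apply/eqP/matrixP => i0 i; rewrite ord1 mxE.
  by rewrite -(hs_E_sum a (fun i => v 0 i) i) -/X0 X00 linear0.
have kX0 : k X0 = lam *: X0.
  rewrite /X0 linear_sum scaler_sumr.
  under eq_bigr => i _ do rewrite linearZ /= (Esp_exp (kin _ (E_in a i))) scaler_sumr.
  rewrite exchange_big /=; apply: eq_bigr => j _.
  under eq_bigr => i _ do rewrite scalerA.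
  rewrite -scaler_suml scalerA; congr (_ *: _).
  have := congr1 (fun w : 'rV[C]_(d xi) => w 0 j) vM; rewrite /= !mxE => <-.
  by apply: eq_bigr => i _; rewrite !mxE.
have hk : forall Y, (k - lam *: \1)%VF Y = k Y - lam *: Y.
  by move=> Y; rewrite add_lfunE opp_lfunE scale_lfunE id_lfunE.
pose U := (Esp E a :&: lker (k - lam *: \1)%VF)%VS.
have Uinv : invariant_sub rho U.
  move=> g X; rewrite !memv_cap !memv_ker !hk => /andP [XW /eqP kX].
  by rewrite Esp_inv //= keq // -linearZ -linearB kX linear0.
have [_ _ hirr] := Eirr a.
case: (hirr U (capvSl _ _) Uinv) => [U0|UW].
  have : X0 \in U by rewrite memv_cap memv_ker hk kX0 subrr eqxx X0in.
  by rewrite U0 memv0 (negbTE X0nz).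
exists lam => X XW; have : X \in U by rewrite UW.
by rewrite memv_cap memv_ker hk subr_eq0 => /andP [_ /eqP].
Qed.

Lemma schur_iso xi xi' (a : 'I_(m xi)) (a' : 'I_(m xi')) (h : 'End('M[C]_n)) :
  (forall X, X \in Esp E a -> h X \in Esp E a') ->
  (forall g X, X \in Esp E a -> h (cg g X) = cg g (h X)) ->
  forall X0, X0 \in Esp E a -> h X0 != 0 -> isomorphic_sub rho (Esp E a) (Esp E a').
Proof.
move=> hin heq X0 X0in hX0.
have [_ _ hirr] := Eirr a; have [nz' _ hirr'] := Eirr a'.
pose K := (Esp E a :&: lker h)%VS.
have Kinv : invariant_sub rho K.
  move=> g X; rewrite !memv_cap !memv_ker => /andP [XW /eqP hX].
  by rewrite Esp_inv //= heq // hX linear0.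
have K0 : K = 0%VS.
  case: (hirr K (capvSl _ _) Kinv) => // KW.
  have : X0 \in K by rewrite KW.
  by rewrite memv_cap memv_ker (negbTE hX0) andbF.
have imsub : (h @: Esp E a <= Esp E a')%VS.
  by apply/subvP => Y /memv_imgP [X XW ->]; exact: hin.
have iminv : invariant_sub rho (h @: Esp E a)%VS.
  move=> g Y /memv_imgP [X XW ->]; rewrite -heq //; apply: memv_img.
  exact: Esp_inv.
have imW : (h @: Esp E a)%VS = Esp E a'.
  case: (hirr' _ imsub iminv) => // im0.
  have : h X0 \in (h @: Esp E a)%VS by apply: memv_img.
  by rewrite im0 memv0 (negbTE hX0).
exists h; split => //.
by rewrite -imW limg_dim_eq.
Qed.

Lemma claimA (f : 'End('M[C]_n)) (hf : equivariant rho f) xi xi'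
  (a : 'I_(m xi)) (b : 'I_(m xi')) i j :
  xi != xi' -> hs (E b j) (f (E a i)) = 0.
Proof.
move=> ne; apply/eqP; apply/negPn/negP => hnz.
pose h := (linfun (Proj E b b) \o f)%VF.
have hE' : forall X, h X = Proj E b b (f X) by move=> X; rewrite comp_lfunE lfunE.
apply: (@Eniso _ _ a b ne); apply: (@schur_iso _ _ a b h _ _ _ (E_in a i)).
- by move=> X _; rewrite hE' Proj_in.
- by move=> g X _; rewrite !hE' hf Proj_equiv.
- by apply: contraNneq hnz => h0; rewrite -(hs_Proj b b) -hE' h0 linear0.
Qed.

Lemma claimB (f : 'End('M[C]_n)) (hf : equivariant rho f) xi (a b : 'I_(m xi)) :
  exists lam, forall i j, hs (E b j) (f (E a i)) = lam * (i == j)%:R.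
Proof.
pose k := (linfun (Proj E b a) \o f)%VF.
have kE : forall X, k X = Proj E b a (f X) by move=> X; rewrite comp_lfunE lfunE.
have kin : forall X, X \in Esp E a -> k X \in Esp E a.
  by move=> X _; rewrite kE Proj_in.
have keq : forall g X, X \in Esp E a -> k (cg g X) = cg g (k X).
  by move=> g X _; rewrite !kE hf Proj_equiv.
have [lam Hl] := schur_scalar kin keq.
exists lam => i j; have := congr1 (hs (E a j)) (Hl _ (E_in a i)).
by rewrite kE hs_Proj hsZr hsEE1 eqxx /= eq_sym.
Qed.

Definition lamf (f : 'End('M[C]_n)) xi (a b : 'I_(m xi)) :=
  (d xi)%:R^-1 * \sum_i hs (E b i) (f (E a i)).

Lemma dnz xi : (d xi)%:R != 0 :> C.
Proof. by rewrite pnatr_eq0 -lt0n d_gt0. Qed.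

Lemma claimB' (f : 'End('M[C]_n)) (hf : equivariant rho f) xi (a b : 'I_(m xi)) i j :
  hs (E b j) (f (E a i)) = lamf f a b * (i == j)%:R.
Proof.
have [lam Hl] := claimB hf a b; suff -> : lamf f a b = lam by [].
rewrite /lamf; under eq_bigr => l _ do rewrite Hl eqxx mulr1.
by rewrite sumr_const card_ord -[lam *+ _]mulr_natr mulrCA mulVf ?mulr1 // dnz.
Qed.

Lemma f_E (f : 'End('M[C]_n)) (hf : equivariant rho f) xi (a : 'I_(m xi)) i :
  f (E a i) = \sum_b lamf f a b *: E b i.
Proof.
rewrite -[LHS]expand_id /expand (bigD1 xi) //= [X in _ + X]big1 ?addr0; last first.
  move=> xi' ne; apply: big1 => b _; apply: big1 => j _.
  by rewrite (claimA hf a b i j) ?scale0r // eq_sym.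
apply: eq_bigr => b _; rewrite (bigD1 i) //= (claimB' hf) eqxx mulr1.
rewrite [X in _ + X]big1 ?addr0 // => j ne.
rewrite (claimB' hf).
have -> : (i == j) = false by rewrite eq_sym; exact: negbTE ne.
by rewrite mulr0 scale0r.
Qed.

Lemma f_span (f : 'End('M[C]_n)) (hf : equivariant rho f) :
  f = \sum_xi \sum_(a < m xi) \sum_(b < m xi) lamf f a b *: linfun (Proj E a b).
Proof.
apply/lfunP => X.
transitivity (f (expand X)); first by rewrite expand_id.
rewrite /expand [LHS]linear_sum sum_lfunE; apply: eq_bigr => xi _.
rewrite [LHS]linear_sum sum_lfunE; apply: eq_bigr => a _.
rewrite [LHS]linear_sum sum_lfunE.
under eq_bigr => i _ do rewrite linearZ /= (f_E hf) scaler_sumr.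
rewrite exchange_big /=; apply: eq_bigr => b _.
rewrite scale_lfunE lfunE /= /Proj scaler_sumr; apply: eq_bigr => i _.
by rewrite !scalerA mulrC.
Qed.

Definition HomG := <<[seq PiN E k | k : Idx m]>>%VS.

Lemma sqrtd_nz xi : sqrtC ((d xi)%:R : C) != 0.
Proof. by rewrite sqrtC_eq0 dnz. Qed.

Lemma equiv_in (f : 'End('M[C]_n)) : equivariant rho f -> f \in HomG.
Proof.
move=> hf; rewrite (f_span hf).
apply: rpred_sum => xi _; apply: rpred_sum => a _; apply: rpred_sum => b _.
have -> : linfun (Proj E a b) =
    (sqrtC ((d xi)%:R : C)) *: PiN E (Tagged (pairT m) (a, b)).
  by rewrite /PiN /= scalerA mulfV ?scale1r // sqrtd_nz.
apply: memvZ; apply: memvZ; apply: memv_span; apply: map_f; by rewrite mem_enum.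
Qed.

Lemma equiv_lin_span (X : seq 'End('M[C]_n)) :
  (forall x, x \in X -> equivariant rho x) ->
  forall f, f \in <<X>>%VS -> equivariant rho f.
Proof.
move=> H f; rewrite -[X]in_tupleE => /coord_span -> g Y.
rewrite !sum_lfunE linear_sum; apply: eq_bigr => i _.
by rewrite !scale_lfunE linearZ /= H // mem_nth.
Qed.

Lemma PiN_equiv k : equivariant rho (PiN E k).
Proof. by move=> g Y; rewrite /PiN !scale_lfunE !lfunE /= Proj_equiv linearZ. Qed.

Lemma HomG_equiv f : f \in HomG <-> equivariant rho f.
Proof.
split; last exact: equiv_in.
apply: equiv_lin_span => x /mapP [k _ ->]; exact: PiN_equiv.
Qed.

Lemma bilin_expand (J K : finType) (c : J -> C) (e : K -> C) (A : J -> 'M[C]_n)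
   (B : K -> 'M[C]_n) X :
  adjmx (\sum_j c j *: A j) *m X *m (\sum_k e k *: B k) =
  \sum_j \sum_k ((c j)^* * e k) *: (adjmx (A j) *m X *m B k).
Proof.
rewrite adjmx_sum !mulmx_suml; apply: eq_bigr => j _.
rewrite adjmxZ -!scalemxAl mulmx_sumr scaler_sumr; apply: eq_bigr => k _.
by rewrite -scalemxAr scalerA.
Qed.

Lemma Twirl_equiv xi (a b : 'I_(m xi)) g X :
  Twirl E a b (cg g X) = cg g (Twirl E a b X).
Proof.
pose h := (g^-1)%g.
pose u (j i : 'I_(d xi)) := hs (E a j) (cg h (E a i)).
have h1 : forall i, cg h (E a i) = \sum_j u j i *: E a j.
  by move=> i; exact: (Esp_exp (Esp_inv h (E_in a i))).
have h2 : forall i, cg h (E b i) = \sum_j u j i *: E b j.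
  by move=> i; rewrite -(Ephi a b).
have h3 : forall j k, \sum_i u k i * (u j i)^* = (k == j)%:R.
  pose U : 'M[C]_(d xi) := \matrix_(j, i) u j i.
  have UU : adjmx U *m U = 1%:M.
    apply/matrixP => i i'; rewrite !mxE.
    transitivity (hs (cg h (E a i)) (cg h (E a i'))); last first.
      by rewrite hs_conj hsEE1 eqxx.
    rewrite [cg h (E a i')]h1 hs_sumr; apply: eq_bigr => j _.
    by rewrite !mxE hsZr mulrC [in RHS]hsC.
  move=> j k; have := mulmx1C UU; move/matrixP/(_ k j); rewrite !mxE => <-.
  by apply: eq_bigr => i _; rewrite !mxE.
have key : \sum_i adjmx (cg h (E a i)) *m X *m cg h (E b i) = Twirl E a b X.
  under eq_bigr => i _ do rewrite h1 h2 bilin_expand.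
  rewrite exchange_big /=; apply: eq_bigr => j _.
  rewrite exchange_big /= (bigD1 j) //= [X in _ + X]big1 ?addr0; last first.
    move=> k ne; rewrite -scaler_suml.
    under eq_bigr => i _ do rewrite mulrC.
    by rewrite h3 (negbTE ne) scale0r.
  rewrite -scaler_suml.
  under eq_bigr => i _ do rewrite mulrC.
  by rewrite h3 eqxx scale1r.
have H : cg h (Twirl E a b (cg g X)) = Twirl E a b X.
  rewrite -key /Twirl linear_sum; apply: eq_bigr => i _.
  rewrite /= /conj_act /h rhoV adjmxK !adjmx_mul adjmxK !mulmxA //.
by rewrite -H conj_actKV.
Qed.

Lemma TwN_equiv k : equivariant rho (TwN E k).
Proof. by move=> g Y; rewrite /TwN !scale_lfunE !lfunE /= Twirl_equiv linearZ. Qed.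
Implicit Types A B Cm D : 'M[C]_n.

Lemma hs_delta A (j k : 'I_n) : hs A (delta_mx j k) = (A j k)^*.
Proof.
rewrite hsE (bigD1 j) //= [X in _ + X]big1 ?addr0; last first.
  move=> p ne; apply: big1 => q _; rewrite mxE.
  by rewrite (negbTE ne) /= mulr0.
rewrite (bigD1 k) //= [X in _ + X]big1 ?addr0; last first.
  by move=> q ne; rewrite mxE eqxx (negbTE ne) /= mulr0.
by rewrite mxE !eqxx mulr1.
Qed.

Lemma parseval_delta A B :
  \sum_(j < n) \sum_(k < n) (hs A (delta_mx j k))^* * hs B (delta_mx j k) = hs B A.
Proof.
rewrite hsE; apply: eq_bigr => j _; apply: eq_bigr => k _.
by rewrite !hs_delta conjCK mulrC.
Qed.

Lemma entry_twirl A B (j k p q : 'I_n) :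
  (adjmx A *m delta_mx j k *m B) p q = (A j p)^* * B k q.
Proof.
rewrite mxE (bigD1 k) //= [X in _ + X]big1 ?addr0; last first.
  move=> l ne; rewrite mxE big1 ?mul0r // => r _.
  by rewrite [delta_mx _ _ _ _]mxE (negbTE ne) andbF mulr0.
rewrite mxE (bigD1 j) //= [X in _ + X]big1 ?addr0; last first.
  by move=> r ne; rewrite [delta_mx _ _ _ _]mxE (negbTE ne) /= mulr0.
by rewrite !mxE !eqxx mulr1.
Qed.

Lemma swap4 (T1 T2 T3 T4 : finType) (f : T1 -> T2 -> T3 -> T4 -> C) :
  \sum_a \sum_b \sum_c \sum_e f a b c e = \sum_c \sum_e \sum_a \sum_b f a b c e.
Proof.
under eq_bigr => a _ do rewrite exchange_big.
rewrite exchange_big; apply: eq_bigr => c _.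
under eq_bigr => a _ do rewrite exchange_big.
by rewrite exchange_big.
Qed.

Lemma twirl_pair A B Cm D :
  \sum_(j < n) \sum_(k < n) hs (adjmx A *m delta_mx j k *m B) (adjmx Cm *m delta_mx j k *m D)
  = hs Cm A * hs B D.
Proof.
rewrite [hs Cm A]hsE [hs B D]hsE mulr_suml; apply: eq_bigr => j _.
rewrite mulr_suml.
under eq_bigr => k _ do rewrite hsE.
rewrite exchange_big; apply: eq_bigr => p _.
rewrite mulr_sumr; apply: eq_bigr => k _.
rewrite mulr_sumr; apply: eq_bigr => q _.
rewrite !entry_twirl rmorphM /= conjCK; ring.
Qed.

Definition S2 xi rh (a b : 'I_(m xi)) (mu nu : 'I_(m rh)) :=
  \sum_(i < d xi) \sum_(i' < d rh) hs (E mu i') (E a i) * hs (E b i) (E nu i').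

Lemma Proj_pair xi rh (a b : 'I_(m xi)) (mu nu : 'I_(m rh)) :
  hs_maps (linfun (Proj E a b)) (linfun (Proj E mu nu)) = S2 a b mu nu.
Proof.
rewrite /hs_maps /S2.
under eq_bigr => j _ do under eq_bigr => k _ do
  rewrite !lfunE /= /Proj hs_suml.
under [RHS]eq_bigr => i _ do under eq_bigr => i' _ do
  rewrite -parseval_delta mulr_suml.
under [RHS]eq_bigr => i _ do under eq_bigr => i' _ do
  under eq_bigr => j _ do rewrite mulr_suml.
rewrite [RHS]swap4; apply: eq_bigr => j _; apply: eq_bigr => k _.
apply: eq_bigr => i _; rewrite hsZl hs_sumr mulr_sumr; apply: eq_bigr => i' _.
by rewrite hsZr mulrA.
Qed.

Lemma Twirl_pair xi rh (a b : 'I_(m xi)) (mu nu : 'I_(m rh)) :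
  hs_maps (linfun (Twirl E a b)) (linfun (Twirl E mu nu)) = S2 a b mu nu.
Proof.
rewrite /hs_maps /S2.
under eq_bigr => j _ do under eq_bigr => k _ do
  rewrite !lfunE /= /Twirl hs_suml.
under eq_bigr => j _ do under eq_bigr => k _ do under eq_bigr => i _ do
  rewrite hs_sumr.
rewrite swap4; apply: eq_bigr => i _; apply: eq_bigr => i' _.
exact: twirl_pair.
Qed.

Lemma S2_val (k k' : Idx m) :
  S2 (tagged k).1 (tagged k).2 (tagged k').1 (tagged k').2 =
  (k == k')%:R * (d (tag k))%:R.
Proof.
case: k => xi [a b]; case: k' => rh [mu nu] /=; rewrite /S2 /=.
case: (eqVneq xi rh) => [e|ne]; last first.
  have -> : (Tagged (pairT m) (a, b) == Tagged (pairT m) (mu, nu)) = false.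
    by apply: negbTE; apply: contra ne => /eqP /(congr1 tag) /= ->.
  rewrite mul0r; apply: big1 => i _; apply: big1 => i' _.
  by rewrite hsEE eq_sym (negbTE ne) mul0r.
subst rh; rewrite eq_Tagged /= xpair_eqE.
under eq_bigr => i _.
  rewrite (bigD1 i) //= [X in _ + X]big1 ?addr0; last first.
    by move=> i' ne; rewrite hsEE1 (negbTE ne) andbF mul0r.
  rewrite !hsEE1 !eqxx !andbT.
over.
rewrite sumr_const card_ord -[_ *+ d xi]mulr_natr; congr (_ * _).
rewrite ?mul1r [mu == a]eq_sym.
by case: (a == mu); case: (b == nu); rewrite /= ?mulr1 ?mulr0 ?mul0r.
Qed.

Lemma hs_maps_scale (c1 c2 : C) (S T : 'End('M[C]_n)) :
  hs_maps (c1 *: S) (c2 *: T) = c1^* * c2 * hs_maps S T.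
Proof.
rewrite /hs_maps mulr_sumr; apply: eq_bigr => j _.
rewrite mulr_sumr; apply: eq_bigr => k _.
by rewrite !scale_lfunE hsZl hsZr mulrA.
Qed.

Lemma cN_conj xi : ((sqrtC ((d xi)%:R : C))^-1)^* = (sqrtC ((d xi)%:R : C))^-1.
Proof. by apply: conj_Creal; rewrite rpredV ger0_real // sqrtC_ge0 ler0n. Qed.

Lemma cN_sq xi :
  (sqrtC ((d xi)%:R : C))^-1 * (sqrtC ((d xi)%:R : C))^-1 * (d xi)%:R = 1.
Proof. by rewrite -invfM -expr2 sqrtCK mulVf // dnz. Qed.

Lemma PiN_orth : orthonormal_family (PiN E).
Proof.
move=> k k'; rewrite /PiN hs_maps_scale Proj_pair S2_val cN_conj.
case: (eqVneq k k') => [<-|ne]; first by rewrite mul1r cN_sq.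
by rewrite mul0r !mulr0.
Qed.

Lemma TwN_orth : orthonormal_family (TwN E).
Proof.
move=> k k'; rewrite /TwN hs_maps_scale Twirl_pair S2_val cN_conj.
case: (eqVneq k k') => [<-|ne]; first by rewrite mul1r cN_sq.
by rewrite mul0r !mulr0.
Qed.

Lemma hs_maps_sumr (J : Type) (r : seq J) (S : 'End('M[C]_n)) (c : J -> C)
   (T : J -> 'End('M[C]_n)) :
  hs_maps S (\sum_(j <- r) c j *: T j) = \sum_(j <- r) c j * hs_maps S (T j).
Proof.
rewrite /hs_maps.
under eq_bigr => a _ do under eq_bigr => b _ do
  rewrite sum_lfunE hs_sumr.
under [RHS]eq_bigr => j _ do rewrite mulr_sumr.
rewrite [RHS]exchange_big; apply: eq_bigr => a _.
under [RHS]eq_bigr => j _ do rewrite mulr_sumr.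
rewrite [RHS]exchange_big; apply: eq_bigr => b _.
by apply: eq_bigr => j _; rewrite scale_lfunE hsZr.
Qed.

Lemma hs_maps_suml (J : Type) (r : seq J) (S : 'End('M[C]_n)) (c : J -> C)
   (T : J -> 'End('M[C]_n)) :
  hs_maps (\sum_(j <- r) c j *: T j) S = \sum_(j <- r) (c j)^* * hs_maps (T j) S.
Proof.
rewrite /hs_maps.
under eq_bigr => a _ do under eq_bigr => b _ do
  rewrite sum_lfunE hs_suml.
under [RHS]eq_bigr => j _ do rewrite mulr_sumr.
rewrite [RHS]exchange_big; apply: eq_bigr => a _.
under [RHS]eq_bigr => j _ do rewrite mulr_sumr.
rewrite [RHS]exchange_big; apply: eq_bigr => b _.
by apply: eq_bigr => j _; rewrite scale_lfunE hsZl.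
Qed.

Lemma hs_maps0 (S : 'End('M[C]_n)) : hs_maps S (0 : 'End('M[C]_n)) = 0.
Proof.
rewrite /hs_maps big1 // => a _; rewrite big1 // => b _.
by rewrite zero_lfunE linear0.
Qed.

Lemma free_orth (F : Idx m -> 'End('M[C]_n)) :
  orthonormal_family F -> free [seq F k | k : Idx m].
Proof.
move=> hF.
have Finj : injective F.
  move=> k k' e; apply/eqP; have := hF k k'; rewrite e hF eqxx.
  by case: (k == k') => // /eqP; rewrite eqr_nat.
set X := [seq F k | k : Idx m].
apply/(@freeP _ _ _ (in_tuple X)) => c Hc i.
have hX : forall j : 'I_(size X), exists k, X`_j = F k.
  move=> j; have : X`_j \in X by rewrite mem_nth.
  by case/mapP => k _ ->; exists k.
have Xuniq : uniq X by rewrite map_inj_uniq // enum_uniq.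
have orthX : forall i j : 'I_(size X), hs_maps (X`_i) (X`_j) = (i == j)%:R.
  move=> i1 j1; have [ki ei] := hX i1; have [kj ej] := hX j1.
  rewrite ei ej hF; congr (_%:R).
  by rewrite -(inj_eq Finj) -ei -ej nth_uniq.
have := congr1 (fun f : 'End('M[C]_n) => hs_maps (X`_i) f) Hc.
rewrite hs_maps0 hs_maps_sumr (bigD1 i) //= orthX eqxx mulr1.
rewrite big1 ?addr0 // => j ne; by rewrite orthX eq_sym (negbTE ne) mulr0.
Qed.

Lemma parseval (f : 'End('M[C]_n)) : f \in HomG ->
  f = \sum_k hs_maps (PiN E k) f *: PiN E k.
Proof.
move=> /span_exists [c ->]; apply: eq_bigr => k _; congr (_ *: _).
rewrite hs_maps_sumr (bigD1 k) //= PiN_orth eqxx mulr1 big1 ?addr0 // => k' ne.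
by rewrite PiN_orth eq_sym (negbTE ne) mulr0.
Qed.

Lemma TwN_in k : TwN E k \in HomG.
Proof. exact: equiv_in (TwN_equiv k). Qed.

Lemma Umx_unitary : unitary_mx (Umx E).
Proof.
have UU : adjmx (Umx E) *m Umx E = 1%:M.
  apply/matrixP => q q'; rewrite !mxE.
  transitivity (\sum_k (hs_maps (PiN E k) (TwN E (enum_val q)))^* *
                 hs_maps (PiN E k) (TwN E (enum_val q'))).
    rewrite [RHS](reindex (@enum_val (Idx m) (Idx m))) /=; last first.
      by apply: onW_bij; exact: enum_val_bij.
    by apply: eq_bigr => p _; rewrite !mxE.
  transitivity (hs_maps (TwN E (enum_val q)) (TwN E (enum_val q'))); last first.
    by rewrite TwN_orth (inj_eq enum_val_inj).
  have P := parseval (TwN_in (enum_val q)).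
  by rewrite [in RHS]P hs_maps_suml.
by split => //; apply: mulmx1C.
Qed.

Lemma card_Idx : #|Idx m| = (\sum_(xi : I) m xi ^ 2)%N.
Proof.
rewrite card_tagged sumnE big_map big_enum /=.
by apply: eq_bigr => xi _; rewrite card_prod card_ord mulnn.
Qed.

Lemma main_sec :
  exists HomG : {vspace 'End('M[C]_n)},
    [/\ (forall f : 'End('M[C]_n), f \in HomG <-> equivariant rho f),
        \dim HomG = (\sum_(xi : I) m xi ^ 2)%N,
        basis_of HomG [seq PiN E k | k : Idx m] /\ orthonormal_family (PiN E),
        basis_of HomG [seq TwN E k | k : Idx m] /\ orthonormal_family (TwN E)
      & unitary_mx (Umx E)].
Proof.
exists HomG.
have fP := free_orth PiN_orth; have fT := free_orth TwN_orth.
have dimH : \dim HomG = #|Idx m| by rewrite /HomG (eqP fP) size_map -cardE.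
split.
- exact: HomG_equiv.
- by rewrite dimH card_Idx.
- by split; [rewrite /basis_of eqxx fP | exact: PiN_orth].
- split; last exact: TwN_orth.
  rewrite /basis_of fT andbT eqEdim; apply/andP; split.
    by apply/span_subvP => x /mapP [k _ ->]; exact: TwN_in.
  by rewrite dimH (eqP fT) size_map -cardE.
- exact: Umx_unitary.
Qed.
End Main.

Unset Implicit Arguments.
Theorem mainTheorem15 (R : realType) (n : nat) (G : groupType)
  (rho : G -> 'M[R[i]]_n) (hrho : unitary_rep rho)
  (I : finType) (m d : I -> nat)
  (E : forall xi : I, 'I_(m xi) -> 'I_(d xi) -> 'M[R[i]]_n)
  (hE : decomposition rho E) :
  exists HomG : {vspace 'End('M[R[i]]_n)},
    [/\ (forall f : 'End('M[R[i]]_n), f \in HomG <-> equivariant rho f),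
        \dim HomG = (\sum_(xi : I) m xi ^ 2)%N,
        basis_of HomG [seq PiN E k | k : Idx m] /\ orthonormal_family (PiN E),
        basis_of HomG [seq TwN E k | k : Idx m] /\ orthonormal_family (TwN E)
      & unitary_mx (Umx E)].
Proof. exact: (main_sec hrho hE). Qed.
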